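(* For all $\mu>0$, $x\ge 0$ and $y>0$, $$\frac{P_{\mu+1}(x,y)}{P_{\mu}(x,y)}<c_{\mu+1}(x,y).$$
   Context: For $\mu>0$, $x>0$, $y\ge0$, the generalized Marcum $P$-function is $P_{\mu}(x,y)=x^{\frac12(1-\mu)}\int_0^{y} t^{\frac12(\mu-1)}e^{-t-x}I_{\mu-1}(2\sqrt{xt})\,dt$ ($I_\nu$ the modified Bessel function of the first kind); at $x=0$ it is defined by continuity, $P_\mu(0,y)=\gamma(\mu,y)/\Gamma(\mu)$ with $\gamma(\mu,y)=\int_0^y t^{\mu-1}e^{-t}dt$. For $x>0$, $y>0$, $c_{\mu}(x,y)=\sqrt{y/x}\,I_{\mu}(2\sqrt{xy})/I_{\mu-1}(2\sqrt{xy})$, and $c_\mu(0,y)=y/\mu$ (its limit as $x\to0^+$). *)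

(* Defs.v *)
From Stdlib Require Import Reals Factorial.
From Coquelicot Require Import Coquelicot.
Open Scope R_scope.

Definition Gamma_fun (a : R) : R :=
  RInt_gen (fun t => Rpower t (a - 1) * exp (- t)) (at_right 0) (Rbar_locally p_infty).

Definition lower_gamma (a y : R) : R :=
  RInt_gen (fun t => Rpower t (a - 1) * exp (- t)) (at_right 0) (at_point y).

Definition BesselI (nu z : R) : R :=
  Series (fun k => Rpower (z / 2) (2 * INR k + nu)
                   / (INR (fact k) * Gamma_fun (INR k + nu + 1))).

(* Generalized Marcum P-function; at x = 0 defined by continuity. *)
Definition MarcumP (mu x y : R) : R :=
  if Req_EM_T x 0 then lower_gamma mu y / Gamma_fun mu
  else Rpower x ((1 - mu) / 2) *
       RInt_gen (fun t => Rpower t ((mu - 1) / 2) * exp (- t - x)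
                          * BesselI (mu - 1) (2 * sqrt (x * t)))
                (at_right 0) (at_point y).

Definition c_fun (mu x y : R) : R :=
  if Req_EM_T x 0 then y / mu
  else sqrt (y / x) * BesselI mu (2 * sqrt (x * y)) / BesselI (mu - 1) (2 * sqrt (x * y)).

(* Main.v *)
Require Import Defs.
From Stdlib Require Import Reals Lra Lia Factorial.
From Coquelicot Require Import Coquelicot.
Open Scope R_scope.


Fixpoint poch (a : R) (n : nat) : R :=
  match n with O => 1 | S n => poch a n * (a + INR n) end.

Lemma poch_pos a n : 0 < a -> 0 < poch a n.
Proof.
  intros Ha; induction n as [|n IH]; simpl; [lra|].
  apply Rmult_lt_0_compat; [lra|]. pose proof (pos_INR n); lra.
Qed.

Definition tE (x : R) (k : nat) := x ^ k / INR (fact k).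
Definition Ee (x : R) (m : nat) := sum_f_R0 (tE x) m.

Lemma fact_pos k : 0 < INR (fact k).
Proof. apply lt_0_INR, lt_O_fact. Qed.

Lemma tE_S x k : tE x (S k) = x / INR (S k) * tE x k.
Proof.
  unfold tE. rewrite fact_simpl, mult_INR. simpl pow.
  pose proof (fact_pos k). pose proof (lt_0_INR (S k) (Nat.lt_0_succ k)).
  field; lra.
Qed.

Lemma tE_nonneg x k : 0 <= x -> 0 <= tE x k.
Proof. intros; unfold tE. apply Rdiv_le_0_compat; [apply pow_le; auto| apply fact_pos]. Qed.

Lemma Ee_S x m : Ee x (S m) = Ee x m + tE x (S m).
Proof. reflexivity. Qed.

Lemma Ee_ge1 x m : 0 <= x -> 1 <= Ee x m.
Proof.
  intros Hx; induction m as [|m IH].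
  - unfold Ee, tE; simpl; lra.
  - rewrite Ee_S. pose proof (tE_nonneg x (S m) Hx). lra.
Qed.

Lemma tE_le_Ee x m : 0 <= x -> tE x m <= Ee x m.
Proof.
  intros Hx; destruct m; [unfold Ee; simpl; lra|].
  rewrite Ee_S. pose proof (Ee_ge1 x m Hx); lra.
Qed.

Lemma Ee_step x m : 0 <= x -> tE x (S m) <= x * Ee x m.
Proof.
  intros Hx. rewrite tE_S.
  pose proof (tE_le_Ee x m Hx). pose proof (tE_nonneg x m Hx).
  assert (1 <= INR (S m)) by (rewrite S_INR; pose proof (pos_INR m); lra).
  apply Rle_trans with (x * tE x m).
  - unfold Rdiv. rewrite Rmult_assoc. apply Rmult_le_compat_l; auto.
    rewrite <- (Rmult_1_l (tE x m)) at 2. apply Rmult_le_compat_r; auto.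
    rewrite <- Rinv_1. apply Rinv_le_contravar; lra.
  - apply Rmult_le_compat_l; auto.
Qed.

Lemma lim_c_over_S c : is_lim_seq (fun n => c / INR (S n)) 0.
Proof.
  assert (H : is_lim_seq (fun n => / INR (S n)) 0).
  { apply (is_lim_seq_incr_1 (fun n => / INR n)).
    replace (Finite 0) with (Rbar_inv p_infty) by reflexivity.
    apply is_lim_seq_inv; [apply is_lim_seq_INR| discriminate]. }
  apply (is_lim_seq_scal_l _ c) in H. simpl in H. rewrite Rmult_0_r in H.
  eapply is_lim_seq_ext; [|exact H]. intros n; simpl. unfold Rdiv. reflexivity.
Qed.

Lemma radius_inf_crit (a : nat -> R) (c : R) :
  (forall n, 0 < a n) ->
  (forall n, a (S n) / a n <= c / INR (S n)) ->
  CV_radius a = p_infty.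
Proof.
  intros Hp Hr. apply CV_radius_infinite_DAlembert.
  - intros n; specialize (Hp n); lra.
  - apply is_lim_seq_le_le with (u := fun _ => 0) (w := fun n => c / INR (S n)).
    + intros n. rewrite Rabs_pos_eq.
      * split; [|apply Hr]. apply Rdiv_le_0_compat; [left; apply Hp| apply Hp].
      * apply Rdiv_le_0_compat; [left; apply Hp| apply Hp].
    + apply is_lim_seq_const.
    + apply lim_c_over_S.
Qed.

Definition cphi (b : R) (k : nat) := / (INR (fact k) * poch b k).

Lemma cphi_pos b k : 0 < b -> 0 < cphi b k.
Proof. intros; unfold cphi. apply Rinv_0_lt_compat, Rmult_lt_0_compat; [apply fact_pos|apply poch_pos; auto]. Qed.

Lemma cphi_radius b : 0 < b -> CV_radius (cphi b) = p_infty.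
Proof.
  intros Hb. apply radius_inf_crit with (c := / b).
  - intros; apply cphi_pos; auto.
  - intros n. unfold cphi. rewrite fact_simpl, mult_INR. simpl poch.
    pose proof (fact_pos n). pose proof (poch_pos b n Hb). pose proof (pos_INR n).
    assert (HS : 0 < INR (S n)) by (apply lt_0_INR; lia).
    replace (/ (INR (S n) * INR (fact n) * (poch b n * (b + INR n))) /
     / (INR (fact n) * poch b n)) with (/ (INR (S n) * (b + INR n))) by (field; repeat split; lra).
    replace (/ b / INR (S n)) with (/ (INR (S n) * b)) by (field; lra).
    apply Rinv_le_contravar; [apply Rmult_lt_0_compat; lra|].
    apply Rmult_le_compat_l; lra.
Qed.

Definition sc (a x : R) (m : nat) := Ee x m / poch a (S m).

Lemma sc_pos a x m : 0 < a -> 0 <= x -> 0 < sc a x m.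
Proof.
  intros; unfold sc. apply Rdiv_lt_0_compat; [pose proof (Ee_ge1 x m); lra| apply poch_pos; auto].
Qed.

Lemma sc_radius a x : 0 < a -> 0 <= x -> CV_radius (sc a x) = p_infty.
Proof.
  intros Ha Hx. apply radius_inf_crit with (c := 1 + x).
  - intros; apply sc_pos; auto.
  - intros n. unfold sc. change (poch a (S (S n))) with (poch a (S n) * (a + INR (S n))).
    pose proof (poch_pos a (S n) Ha). pose proof (Ee_ge1 x n Hx).
    pose proof (Ee_step x n Hx). rewrite Ee_S.
    assert (HS : 0 < INR (S n)) by (apply lt_0_INR; lia).
    replace ((Ee x n + tE x (S n)) / (poch a (S n) * (a + INR (S n))) / (Ee x n / poch a (S n)))
      with ((Ee x n + tE x (S n)) / Ee x n / (a + INR (S n))) by (field; repeat split; lra).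
    unfold Rdiv. apply Rmult_le_compat.
    + apply Rmult_le_pos; [pose proof (tE_nonneg x (S n) Hx); lra| left; apply Rinv_0_lt_compat; lra].
    + left; apply Rinv_0_lt_compat; lra.
    + apply Rmult_le_reg_r with (Ee x n); [lra|].
      rewrite Rmult_assoc, Rinv_l by lra. nra.
    + apply Rinv_le_contravar; lra.
Qed.

Definition Phi (b s : R) := PSeries (cphi b) s.
Definition Sf (a x y : R) := PSeries (sc a x) y.
Definition W (a x y : R) := exp (- y) * Rpower y a * Sf a x y.

Lemma ex_ps_inf (c : nat -> R) y : CV_radius c = p_infty -> ex_pseries c y.
Proof. intros H; apply CV_radius_inside; rewrite H; exact I. Qed.

Lemma Phi_scale b x y : PSeries (fun n => x ^ n * cphi b n) y = Phi b (x * y).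
Proof.
  unfold Phi, PSeries. apply Series_ext. intros n. rewrite Rpow_mult_distr.
  unfold scal; simpl; unfold mult; simpl. ring.
Qed.

Lemma Sf_identity a x y : 0 < a -> 0 <= x ->
  a * Sf a x y - y * Sf a x y + y * PSeries (PS_derive (sc a x)) y = Phi a (x * y).
Proof.
  intros Ha Hx. set (s := sc a x).
  assert (Rs : CV_radius s = p_infty) by (apply sc_radius; auto).
  assert (E1 : ex_pseries s y) by (apply ex_ps_inf; auto).
  assert (E2 : ex_pseries (PS_derive s) y) by (apply ex_ps_inf; rewrite CV_radius_derive; auto).
  unfold Sf. fold s.
  rewrite <- PSeries_scal, <- !PSeries_incr_1.
  unfold Rminus. rewrite <- PSeries_opp.
  rewrite <- PSeries_plus.
  2:{ apply ex_pseries_scal; [apply Rmult_comm| auto]. }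
  2:{ apply ex_pseries_opp, ex_pseries_incr_1; auto. }
  rewrite <- PSeries_plus.
  2:{ apply ex_pseries_plus; [apply ex_pseries_scal; [apply Rmult_comm| auto]|].
      apply ex_pseries_opp, ex_pseries_incr_1; auto. }
  2:{ apply ex_pseries_incr_1; auto. }
  rewrite <- Phi_scale. apply PSeries_ext. intros n.
  unfold PS_plus, PS_scal, PS_opp, PS_incr_1, PS_derive, plus, opp, scal; simpl;
  unfold mult; simpl. unfold s, sc, cphi.
  destruct n as [|m].
  - unfold Ee, tE; simpl. field. lra.
  - change (poch a (S (S m))) with (poch a (S m) * (a + INR (S m))).
    rewrite Ee_S. unfold tE.
    pose proof (poch_pos a (S m) Ha). pose proof (fact_pos (S m)).
    assert (0 < INR (S m)) by (apply lt_0_INR; lia).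
    change (match m with 0%nat => 1 | S _ => INR m + 1 end) with (INR (S m)).
    field. repeat split; lra.
Qed.

Lemma W_derive a x y : 0 < a -> 0 <= x -> 0 < y ->
  is_derive (W a x) y (Rpower y (a - 1) * exp (- y) * Phi a (x * y)).
Proof.
  intros Ha Hx Hy. unfold W.
  assert (Rs : CV_radius (sc a x) = p_infty) by (apply sc_radius; auto).
  assert (D1 : is_derive (fun t => exp (- t)) y (- exp (- y))).
  { auto_derive; [exact I| ring]. }
  assert (D2 : is_derive (fun t => Rpower t a) y (a * Rpower y (a - 1))).
  { apply is_derive_Reals. apply derivable_pt_lim_power; auto. }
  assert (D3 : is_derive (Sf a x) y (PSeries (PS_derive (sc a x)) y)).
  { apply is_derive_PSeries. rewrite Rs; exact I. }
  pose proof (is_derive_mult _ _ _ _ _ (is_derive_mult _ _ _ _ _ D1 D2 Rmult_comm) D3 Rmult_comm) as D.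
  eapply is_derive_ext; [intros; reflexivity|].
  match goal with |- is_derive _ _ ?v => replace v with (plus
           (mult (plus (mult (- exp (- y)) (Rpower y a)) (mult (exp (- y)) (a * Rpower y (a - 1))))
              (Sf a x y)) (mult (exp (- y) * Rpower y a) (PSeries (PS_derive (sc a x)) y))) end.
  exact D.
  unfold plus, mult; simpl.
  rewrite <- (Sf_identity a x y Ha Hx).
  replace (Rpower y a) with (y * Rpower y (a - 1)).
  2:{ rewrite <- (Rpower_1 y) at 1 by auto. rewrite <- Rpower_plus. f_equal; ring. }
  ring.
Qed.

Lemma at_right_le_locally (x : R) (P : R -> Prop) : locally x P -> at_right x P.
Proof. intros H. unfold at_right, within. apply filter_imp with P; auto. Qed.

Lemma cont_at_right (f : R -> R) (x : R) : continuous f x -> filterlim f (at_right x) (locally (f x)).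
Proof. intros H P HP. apply at_right_le_locally. apply H. exact HP. Qed.

Lemma filterlim_mult_R {T} (F : (T -> Prop) -> Prop) {FF : Filter F} (f g : T -> R) lf lg :
  filterlim f F (locally lf) -> filterlim g F (locally lg) ->
  filterlim (fun t => f t * g t) F (locally (lf * lg)).
Proof.
  intros Hf Hg. apply (filterlim_comp_2 f g Rmult Hf Hg).
  apply (filterlim_mult (K := R_AbsRing) lf lg).
Qed.

Lemma Rpower_lim0 a : 0 < a -> filterlim (fun t => Rpower t a) (at_right 0) (locally 0).
Proof.
  intros Ha.
  apply filterlim_ext_loc with (fun t => exp (a * ln t)).
  { exists (mkposreal 1 Rlt_0_1). intros t _ Ht. unfold Rpower. f_equal. }
  eapply filterlim_comp with (G := Rbar_locally m_infty).
  - eapply filterlim_comp. apply is_lim_ln_0.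
    assert (Hm := filterlim_Rbar_mult_l a m_infty).
    assert (E : Rbar_mult a m_infty = m_infty).
    { simpl. destruct (Rle_dec 0 a); [|lra]. destruct (Rle_lt_or_eq_dec 0 a r); [reflexivity| lra]. }
    rewrite E in Hm. exact Hm.
  - apply is_lim_exp_m.
Qed.

Lemma Sf_cont a x t : 0 < a -> 0 <= x -> continuous (Sf a x) t.
Proof.
  intros Ha Hx. apply (ex_derive_continuous (Sf a x)). apply ex_derive_PSeries.
  rewrite sc_radius; auto. exact I.
Qed.

Lemma W_lim0 a x : 0 < a -> 0 <= x -> filterlim (W a x) (at_right 0) (locally 0).
Proof.
  intros Ha Hx. unfold W.
  assert (H : filterlim (fun y => exp (- y) * Rpower y a * Sf a x y) (at_right 0) (locally ((exp (- 0) * 0) * Sf a x 0))).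
  2:{ replace ((exp (- 0) * 0) * Sf a x 0) with 0 in H by ring. exact H. }
  apply filterlim_mult_R; [exact _|apply filterlim_mult_R;[exact _| |]|].
  - apply (cont_at_right (fun y => exp (- y)) 0). apply (ex_derive_continuous (fun y => exp (- y))). auto_derive. exact I.
  - apply Rpower_lim0; auto.
  - apply (cont_at_right (Sf a x) 0). apply Sf_cont; auto.
Qed.

Definition gint (a x t : R) := Rpower t (a - 1) * exp (- t) * Phi a (x * t).

Lemma gint_cont a x t : 0 < a -> 0 < t -> continuous (gint a x) t.
Proof.
  intros Ha Ht. apply (ex_derive_continuous (gint a x)). unfold gint.
  apply ex_derive_mult; [apply ex_derive_mult|].
  - exists ((a - 1) * Rpower t (a - 1 - 1)). apply is_derive_Reals, derivable_pt_lim_power; auto.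
  - auto_derive; exact I.
  - apply (ex_derive_comp (Phi a) (fun u => x * u)).
    + apply ex_derive_PSeries. rewrite cphi_radius; auto. exact I.
    + auto_derive; exact I.
Qed.

Lemma W_int a x (Fb : (R -> Prop) -> Prop) l : 0 < a -> 0 <= x -> Filter Fb ->
  Fb (fun b => 0 < b) -> filterlim (W a x) Fb (locally l) ->
  is_RInt_gen (gint a x) (at_right 0) Fb l.
Proof.
  intros Ha Hx FF Hb Hl.
  assert (Hpos : filter_prod (at_right 0) Fb (fun ab => 0 < fst ab /\ 0 < snd ab)).
  { exists (fun u => 0 < u) (fun u => 0 < u); auto.
    exists (mkposreal 1 Rlt_0_1). intros; auto. }
  assert (Hin : forall ab t, 0 < fst ab /\ 0 < snd ab ->
            Rmin (fst ab) (snd ab) <= t <= Rmax (fst ab) (snd ab) -> 0 < t).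
  { intros [u v] t [H1 H2] [H3 H4]; simpl in *.
    apply Rlt_le_trans with (Rmin u v); auto. apply Rmin_case; auto. }
  assert (HD : forall t, 0 < t -> Derive (W a x) t = gint a x t).
  { intros t Ht. apply is_derive_unique. apply W_derive; auto. }
  apply is_RInt_gen_ext with (Derive (W a x)).
  { apply filter_imp with (2 := Hpos). intros ab Hab t Ht.
    apply HD. apply (Hin ab t Hab). split; left; apply Ht. }
  replace l with (l - 0) by ring.
  apply (is_RInt_gen_Derive (W a x) 0 l).
  - apply filter_imp with (2 := Hpos). intros ab Hab t Ht.
    exists (gint a x t). apply W_derive; auto. apply (Hin ab t Hab Ht).
  - apply filter_imp with (2 := Hpos). intros ab Hab t Ht.
    pose proof (Hin ab t Hab Ht) as Htp.
    apply continuous_ext_loc with (gint a x).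
    + exists (mkposreal t Htp). intros u Hu. symmetry. apply HD.
      unfold ball in Hu; simpl in Hu; unfold AbsRing_ball, abs, minus, plus, opp in Hu; simpl in Hu.
      apply Rabs_def2 in Hu. lra.
    + apply gint_cont; auto.
  - apply W_lim0; auto.
  - exact Hl.
Qed.

Lemma mono_from_deriv (f df : R -> R) (lo : R) :
  (forall t, lo < t -> is_derive f t (df t)) -> (forall t, lo < t -> 0 <= df t) ->
  forall u v, lo < u -> u <= v -> f u <= f v.
Proof.
  intros Hd Hp u v Hu Huv.
  destruct (Req_dec u v) as [<-|Hne]; [lra|].
  destruct (MVT_gen f u v df) as [c [Hc Heq]].
  - intros t Ht. apply Hd. rewrite Rmin_left in Ht by lra. lra.
  - intros t Ht. rewrite Rmin_left in Ht by lra. apply continuity_pt_filterlim.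
    apply (ex_derive_continuous f). exists (df t). apply Hd. lra.
  - rewrite Rmin_left in Hc by lra. assert (0 <= df c) by (apply Hp; lra).
    assert (0 <= df c * (v - u)) by (apply Rmult_le_pos; lra). lra.
Qed.

Lemma mono_lim (f : R -> R) (B : R) :
  (forall u v, 0 < u -> u <= v -> f u <= f v) -> (forall u, 0 < u -> f u <= B) ->
  exists l, filterlim f (Rbar_locally p_infty) (locally l) /\ (forall u, 0 < u -> f u <= l).
Proof.
  intros Hm HB.
  set (E := fun z => exists u, 0 < u /\ z = f u).
  destruct (completeness E) as [l [Hub Hlub]].
  - exists B. intros z [u [Hu ->]]. auto.
  - exists (f 1). exists 1. split; [lra|auto].
  - exists l. split.
    + intros P [eps Heps].
      assert (Hex : exists u, 0 < u /\ l - eps < f u).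
      { apply Classical_Pred_Type.not_all_not_ex. intros Hno.
        assert (Hb : is_upper_bound E (l - eps)).
        { intros z [u [Hu ->]]. specialize (Hno u). apply Rnot_lt_le. intros Hc. apply Hno; auto. }
        specialize (Hlub _ Hb). pose proof (cond_pos eps). lra. }
      destruct Hex as [u [Hu Hlu]].
      exists u. intros v Hv. apply Heps.
      unfold ball; simpl; unfold AbsRing_ball, abs, minus, plus, opp; simpl.
      assert (f u <= f v) by (apply Hm; lra).
      assert (f v <= l) by (apply Hub; exists v; split; [lra|auto]).
      apply Rabs_def1; lra.
    + intros u Hu. apply Hub. exists u; auto.
Qed.

Lemma exp_le a b : a <= b -> exp a <= exp b.
Proof. intros H; destruct (Rle_lt_or_eq_dec a b H) as [H1|H1]; [left; apply exp_increasing; auto| rewrite H1; lra]. Qed.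

Lemma Rpower_bound (p : R) : exists C, 0 < C /\ forall t, 1 <= t -> Rpower t p <= C * exp (t / 2).
Proof.
  set (A := Rmax p 1). assert (HA : 1 <= A) by apply Rmax_r. assert (HpA : p <= A) by apply Rmax_l.
  exists (exp (A * ln (2 * A))). split; [apply exp_pos|].
  intros t Ht. unfold Rpower. rewrite <- exp_plus. apply exp_le.
  assert (Hln : 0 <= ln t) by (rewrite <- ln_1; apply ln_le; lra).
  assert (H1 : ln (t / (2 * A)) <= t / (2 * A) - 1).
  { pose proof (exp_ineq1_le (ln (t / (2 * A)))). rewrite exp_ln in H by (apply Rdiv_lt_0_compat; lra). lra. }
  rewrite ln_div in H1 by lra.
  assert (H2 : A * ln t <= A * ln (2 * A) + t / 2).
  { assert (A * (ln t - ln (2 * A)) <= A * (t / (2 * A) - 1)) by (apply Rmult_le_compat_l; lra).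
    replace (A * (t / (2 * A) - 1)) with (t / 2 - A) in H by (field; lra). lra. }
  assert (p * ln t <= A * ln t) by (apply Rmult_le_compat_r; lra). lra.
Qed.

Lemma filterlim_plus_R {T} (F : (T -> Prop) -> Prop) {FF : Filter F} (f g : T -> R) lf lg :
  filterlim f F (locally lf) -> filterlim g F (locally lg) ->
  filterlim (fun t => f t + g t) F (locally (lf + lg)).
Proof.
  intros Hf Hg. apply (filterlim_comp_2 f g Rplus Hf Hg).
  apply (filterlim_plus (K := R_AbsRing) (V := R_NormedModule) lf lg).
Qed.

Lemma Phi_0 b : Phi b 0 = 1.
Proof. unfold Phi. rewrite PSeries_0. unfold cphi. simpl. field. Qed.

Lemma PSeries_pos (c : nat -> R) y : (forall n, 0 < c n) -> 0 <= y -> ex_pseries c y ->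
  0 < PSeries c y.
Proof.
  intros Hc Hy Hex0.
  assert (Hex : ex_series (fun k => c k * y ^ k)).
  { eapply ex_series_ext; [|exact Hex0]. intros k; cbv beta; rewrite pow_n_pow; unfold scal; simpl; unfold mult; simpl; ring. }
  assert (HP : PSeries c y = Series (fun k => c k * y ^ k)) by (apply Series_ext; intros k; reflexivity).
  rewrite HP.
  rewrite Series_incr_1 by exact Hex.
  assert (0 <= Series (fun k => c (S k) * y ^ S k)).
  { replace 0 with (Series (fun _ : nat => 0)).
    2:{ transitivity (PSeries (fun _ => 0) y); [|apply PSeries_const_0]. unfold PSeries. apply Series_ext. intros k. cbv beta. try rewrite pow_n_pow. unfold scal; simpl; unfold mult; simpl. ring. }
    apply Series_le.
    - intros n; split; [lra|]. apply Rmult_le_pos; [left; auto| apply pow_le; auto].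
    - apply ex_series_incr_1 in Hex. exact Hex. }
  rewrite pow_O, Rmult_1_r. specialize (Hc 0%nat). lra.
Qed.

Lemma W0_deriv a t : 0 < a -> 0 < t -> is_derive (W a 0) t (Rpower t (a - 1) * exp (- t)).
Proof.
  intros Ha Ht. pose proof (W_derive a 0 t Ha (Rle_refl 0) Ht) as H.
  rewrite Rmult_0_l, Phi_0, Rmult_1_r in H. exact H.
Qed.

Lemma W0_mono a : 0 < a -> forall u v, 0 < u -> u <= v -> W a 0 u <= W a 0 v.
Proof.
  intros Ha. apply (mono_from_deriv _ (fun t => Rpower t (a - 1) * exp (- t)) 0).
  - intros; apply W0_deriv; auto.
  - intros t Ht. apply Rmult_le_pos; left; [apply exp_pos| apply exp_pos].
Qed.

Lemma W0_bound a : 0 < a -> exists B, forall u, 0 < u -> W a 0 u <= B.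
Proof.
  intros Ha. destruct (Rpower_bound (a - 1)) as [C [HC HCb]].
  set (H := fun b => W a 0 b + 2 * C * exp (- b / 2)).
  assert (Hmono : forall u v, 1 < u -> u <= v -> - H u <= - H v).
  { apply (mono_from_deriv (fun u => - H u) (fun t => - (Rpower t (a - 1) * exp (- t)) + C * exp (- t / 2)) 1).
    - intros t Ht. unfold H.
      apply (is_derive_ext (fun b => - W a 0 b + (-2 * C) * exp (- b / 2))).
      { intros s. simpl. ring. }
      apply (is_derive_plus (fun b => - W a 0 b)).
      + apply (is_derive_opp (W a 0)). apply W0_deriv; lra.
      + auto_derive; [exact I| unfold Rdiv; field].
    - intros t Ht. specialize (HCb t (Rlt_le _ _ Ht)).
      assert (Rpower t (a - 1) * exp (- t) <= C * exp (- t / 2)).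
      { replace (C * exp (- t / 2)) with (C * exp (t / 2) * exp (- t)).
        - apply Rmult_le_compat_r; [left; apply exp_pos| auto].
        - rewrite Rmult_assoc, <- exp_plus. f_equal. f_equal. field. }
      lra. }
  exists (H 2). intros u Hu.
  destruct (Rle_lt_dec u 2) as [Hu2|Hu2].
  - apply Rle_trans with (W a 0 2); [apply W0_mono; auto|].
    unfold H. cbv beta. rewrite <- (Rplus_0_r (W a 0 2)) at 1. apply Rplus_le_compat_l. apply Rmult_le_pos; [lra| left; apply exp_pos].
  - specialize (Hmono 2 u ltac:(lra) (Rlt_le _ _ Hu2)).
    unfold H in Hmono |- *. cbv beta in Hmono |- *. assert (0 < 2 * C * exp (- u / 2)) by (apply Rmult_lt_0_compat; [lra| apply exp_pos]). lra.
Qed.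

Lemma W0_int a (Fb : (R -> Prop) -> Prop) l : 0 < a -> Filter Fb ->
  Fb (fun b => 0 < b) -> filterlim (W a 0) Fb (locally l) ->
  is_RInt_gen (fun t => Rpower t (a - 1) * exp (- t)) (at_right 0) Fb l.
Proof.
  intros Ha FF Hb Hl. apply is_RInt_gen_ext with (gint a 0).
  - apply filter_forall. intros ab t _. unfold gint. rewrite Rmult_0_l, Phi_0. simpl. ring.
  - apply W_int; auto. lra.
Qed.

Lemma Gamma_spec a : 0 < a ->
  filterlim (W a 0) (Rbar_locally p_infty) (locally (Gamma_fun a)) /\
  (forall u, 0 < u -> W a 0 u <= Gamma_fun a).
Proof.
  intros Ha. destruct (W0_bound a Ha) as [B HB].
  destruct (mono_lim (W a 0) B (W0_mono a Ha) HB) as [l [Hl Hle]].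
  assert (E : Gamma_fun a = l).
  { unfold Gamma_fun. apply is_RInt_gen_unique. apply W0_int.
    - exact Ha.
    - exact _.
    - exists 0. intros; auto.
    - exact Hl. }
  rewrite E. auto.
Qed.

Lemma lower_gamma_W a y : 0 < a -> 0 < y -> lower_gamma a y = W a 0 y.
Proof.
  intros Ha Hy. unfold lower_gamma. apply is_RInt_gen_unique. apply W0_int; auto.
  - exact _.
  - unfold at_point; auto.
  - intros P HP. unfold filtermap, at_point. apply locally_singleton; auto.
Qed.

Lemma W_pos a x y : 0 < a -> 0 <= x -> 0 < y -> 0 < W a x y.
Proof.
  intros Ha Hx Hy. unfold W. apply Rmult_lt_0_compat; [apply Rmult_lt_0_compat; [apply exp_pos|apply exp_pos]|].
  apply PSeries_pos; [intros; apply sc_pos; auto| lra| apply ex_ps_inf, sc_radius; auto].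
Qed.

Lemma Gamma_pos a : 0 < a -> 0 < Gamma_fun a.
Proof.
  intros Ha. destruct (Gamma_spec a Ha) as [_ H]. specialize (H 1 Rlt_0_1).
  pose proof (W_pos a 0 1 Ha (Rle_refl 0) Rlt_0_1). lra.
Qed.

Lemma poch_shift a n : poch a (S n) = a * poch (a + 1) n.
Proof.
  induction n as [|n IH].
  - simpl. ring.
  - change (poch a (S (S n))) with (poch a (S n) * (a + INR (S n))).
    rewrite IH. simpl poch. rewrite S_INR. ring.
Qed.

Lemma Ee_0 m : Ee 0 m = 1.
Proof.
  induction m as [|m IH].
  - unfold Ee, tE; simpl. field.
  - rewrite Ee_S, IH. unfold tE. simpl. unfold Rdiv. ring.
Qed.

Lemma Sf0_rec a y : 0 < a -> a * Sf a 0 y = 1 + y * Sf (a + 1) 0 y.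
Proof.
  intros Ha. unfold Sf. rewrite <- PSeries_scal.
  rewrite PSeries_decr_1.
  2:{ apply ex_pseries_scal; [apply Rmult_comm|]. apply ex_ps_inf, sc_radius; lra. }
  f_equal.
  - unfold PS_scal, sc. rewrite Ee_0. simpl. unfold scal; simpl; unfold mult; simpl. field. lra.
  - f_equal. apply PSeries_ext. intros n. unfold PS_decr_1, PS_scal, sc. rewrite !Ee_0.
    assert (Hc : a * (1 / poch a (S (S n))) = 1 / poch (a + 1) (S n)).
    { rewrite (poch_shift a (S n)). pose proof (poch_pos (a + 1) (S n) ltac:(lra)). field. split; lra. }
    rewrite <- Hc. reflexivity.
Qed.

Lemma W_rec a b : 0 < a -> 0 < b -> W (a + 1) 0 b = a * W a 0 b - Rpower b a * exp (- b).
Proof.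
  intros Ha Hb. unfold W.
  replace (Rpower b (a + 1)) with (Rpower b a * b).
  2:{ rewrite Rpower_plus, Rpower_1; auto. }
  replace (exp (- b) * (Rpower b a * b) * Sf (a + 1) 0 b) with (exp (- b) * Rpower b a * (b * Sf (a + 1) 0 b)) by ring.
  replace (b * Sf (a + 1) 0 b) with (a * Sf a 0 b - 1) by (rewrite Sf0_rec; auto; ring).
  ring.
Qed.

Lemma lim_pow_exp a : filterlim (fun b => Rpower b a * exp (- b)) (Rbar_locally p_infty) (locally 0).
Proof.
  destruct (Rpower_bound a) as [C [HC HCb]].
  change (filterlim (fun b => Rpower b a * exp (- b)) (Rbar_locally p_infty) (Rbar_locally (Finite 0))).
  apply filterlim_le_le with (f := fun _ => 0) (h := fun b => C * exp (- b / 2)).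
  - exists 1. intros b Hb. split.
    + apply Rmult_le_pos; left; [apply exp_pos| apply exp_pos].
    + specialize (HCb b (Rlt_le _ _ Hb)).
      replace (C * exp (- b / 2)) with (C * exp (b / 2) * exp (- b)).
      * apply Rmult_le_compat_r; [left; apply exp_pos| auto].
      * rewrite Rmult_assoc, <- exp_plus. f_equal. f_equal. field.
  - apply filterlim_const.
  - change (filterlim (fun b => C * exp (- b / 2)) (Rbar_locally p_infty) (locally 0)).
    replace 0 with (C * 0) by ring.
    apply filterlim_mult_R; [exact _| apply filterlim_const|].
    apply filterlim_comp with (G := Rbar_locally m_infty).
    + apply filterlim_ext with (fun b => (- / 2) * b).
      { intros; field. }
      assert (Hm := filterlim_Rbar_mult_l (- / 2) p_infty).
      assert (E : Rbar_mult (- / 2) p_infty = m_infty).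
      { unfold Rbar_mult, Rbar_mult'. destruct (Rle_dec 0 (- / 2)); [exfalso; lra|]. reflexivity. }
      rewrite E in Hm. exact Hm.
    + apply is_lim_exp_m.
Qed.

Lemma Gamma_rec a : 0 < a -> Gamma_fun (a + 1) = a * Gamma_fun a.
Proof.
  intros Ha. destruct (Gamma_spec (a + 1) ltac:(lra)) as [H1 _].
  destruct (Gamma_spec a Ha) as [H2 _].
  apply (filterlim_locally_unique (F := Rbar_locally p_infty) (W (a + 1) 0)); [exact H1|].
  apply filterlim_ext_loc with (fun b => a * W a 0 b + (-1) * (Rpower b a * exp (- b))).
  { exists 0. intros b Hb. rewrite W_rec; auto. ring. }
  replace (a * Gamma_fun a) with (a * Gamma_fun a + (-1) * 0) by ring.
  apply filterlim_plus_R; [exact _| |].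
  - apply filterlim_mult_R; [exact _| apply filterlim_const| exact H2].
  - apply filterlim_mult_R; [exact _| apply filterlim_const| apply lim_pow_exp].
Qed.

Lemma Gamma_poch b k : 0 < b -> Gamma_fun (INR k + b) = poch b k * Gamma_fun b.
Proof.
  intros Hb. induction k as [|k IH].
  - simpl INR. simpl poch. rewrite Rplus_0_l. ring.
  - rewrite S_INR. replace (INR k + 1 + b) with ((INR k + b) + 1) by ring.
    rewrite Gamma_rec by (pose proof (pos_INR k); lra).
    rewrite IH. simpl poch. ring.
Qed.

Lemma Bessel_eq nu s : 0 < nu + 1 -> 0 < s ->
  BesselI nu (2 * sqrt s) = Rpower s (nu / 2) / Gamma_fun (nu + 1) * Phi (nu + 1) s.
Proof.
  intros Hb Hs. unfold BesselI, Phi.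
  pose proof (Gamma_pos _ Hb) as HG.
  unfold PSeries. rewrite <- Series_scal_l. apply Series_ext. intros k.
  replace (2 * sqrt s / 2) with (sqrt s) by field.
  rewrite <- Rpower_sqrt by auto. rewrite Rpower_mult.
  replace (/ 2 * (2 * INR k + nu)) with (INR k + nu / 2) by field.
  rewrite Rpower_plus, Rpower_pow by auto.
  replace (INR k + nu + 1) with (INR k + (nu + 1)) by ring.
  rewrite Gamma_poch by auto. unfold cphi.
  pose proof (fact_pos k). pose proof (poch_pos (nu + 1) k Hb).
  generalize dependent (Gamma_fun (nu + 1)). intros G HG.
  generalize dependent (poch (nu + 1) k). intros P HP. generalize dependent (INR (fact k)). intros F HF.
  generalize (Rpower s (nu / 2)). intros Q.
  field. repeat split; lra.
Qed.





Lemma W_int_pt_scal a x y K : 0 < a -> 0 <= x -> 0 < y ->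
  is_RInt_gen (fun t => K * gint a x t) (at_right 0) (at_point y) (K * W a x y).
Proof.
  intros Ha Hx Hy.
  assert (H : is_RInt_gen (gint a x) (at_right 0) (at_point y) (W a x y)).
  { apply W_int; auto.
    - exact _.
    - unfold at_point; auto.
    - intros P HP. unfold filtermap, at_point. apply locally_singleton; auto. }
  apply (is_RInt_gen_scal _ K) in H. exact H.
Qed.

Lemma Marcum_eq mu x y : 0 < mu -> 0 <= x -> 0 < y ->
  MarcumP mu x y = exp (- x) / Gamma_fun mu * W mu x y.
Proof.
  intros Hmu Hx Hy. pose proof (Gamma_pos _ Hmu) as HG. unfold MarcumP.
  destruct (Req_EM_T x 0) as [->|Hx0].
  - rewrite lower_gamma_W by auto. rewrite Ropp_0, exp_0.
    generalize dependent (Gamma_fun mu); intros G HG. generalize (W mu 0 y); intros w. field. lra.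
  - assert (Hxp : 0 < x) by lra.
    set (K := exp (- x) * Rpower x ((mu - 1) / 2) / Gamma_fun mu).
    assert (HI : is_RInt_gen (fun t => Rpower t ((mu - 1) / 2) * exp (- t - x) *
                      BesselI (mu - 1) (2 * sqrt (x * t))) (at_right 0) (at_point y) (K * W mu x y)).
    { apply is_RInt_gen_ext with (fun t => K * gint mu x t).
      - exists (fun u => 0 < u) (fun u => u = y).
        + exists (mkposreal 1 Rlt_0_1). intros; auto.
        + reflexivity.
        + intros u v Hu Hv t Ht. simpl in Ht. subst v.
          assert (Htp : 0 < t) by (destruct Ht as [Ht _]; eapply Rle_lt_trans; [|exact Ht]; apply Rmin_case; lra).
          rewrite Bessel_eq by (try lra; apply Rmult_lt_0_compat; lra).
          replace (mu - 1 + 1) with mu by ring. unfold K, gint.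
          rewrite <- Rpower_mult_distr by lra.
          replace (exp (- t - x)) with (exp (- t) * exp (- x)) by (rewrite <- exp_plus; f_equal; ring).
          replace (Rpower t (mu - 1)) with (Rpower t ((mu - 1) / 2) * Rpower t ((mu - 1) / 2))
            by (rewrite <- Rpower_plus; f_equal; field).
          generalize dependent (Gamma_fun mu); intros G HG.
          generalize (Rpower t ((mu - 1) / 2)) (Rpower x ((mu - 1) / 2)) (exp (- t)) (exp (- x)) (Phi mu (x * t)).
          intros. match goal with |- @eq _ ?a ?b => change (@eq R a b) end. field. lra.
      - apply W_int_pt_scal; auto. }
    rewrite (is_RInt_gen_unique _ _ HI). clear HI. unfold K. clear K.
    assert (E : Rpower x ((1 - mu) / 2) * Rpower x ((mu - 1) / 2) = 1).
    { rewrite <- Rpower_plus. replace ((1 - mu) / 2 + (mu - 1) / 2) with 0 by field. apply Rpower_O; auto. }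
    revert E. generalize (Rpower x ((1 - mu) / 2)) (Rpower x ((mu - 1) / 2)) (exp (- x)) (W mu x y).
    generalize dependent (Gamma_fun mu); intros G HG. intros r1 r2 e w E.
    replace (r1 * (e * r2 / G * w)) with ((r1 * r2) * (e / G * w)) by (field; lra).
    rewrite E. ring.
Qed.

Lemma Phi_pos b s : 0 < b -> 0 <= s -> 0 < Phi b s.
Proof.
  intros Hb Hs. unfold Phi. apply PSeries_pos; [intros; apply cphi_pos; auto| auto| apply ex_ps_inf, cphi_radius; auto].
Qed.

Lemma c_eq mu x y : 0 < mu -> 0 <= x -> 0 < y ->
  c_fun (mu + 1) x y = y * Phi (mu + 2) (x * y) / ((mu + 1) * Phi (mu + 1) (x * y)).
Proof.
  intros Hmu Hx Hy. unfold c_fun.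
  destruct (Req_EM_T x 0) as [->|Hx0].
  - rewrite Rmult_0_l, !Phi_0. field. lra.
  - assert (Hxp : 0 < x) by lra. assert (Hs : 0 < x * y) by (apply Rmult_lt_0_compat; lra).
    rewrite !Bessel_eq by lra.
    replace (mu + 1 - 1 + 1) with (mu + 1) by ring.
    replace (mu + 1 + 1) with (mu + 2) by ring.
    replace (mu + 1 - 1) with mu by ring.
    replace (mu + 2) with ((mu + 1) + 1) at 1 by ring.
    rewrite (Gamma_rec (mu + 1)) by lra.
    replace (Rpower (x * y) ((mu + 1) / 2)) with (Rpower (x * y) (mu / 2) * sqrt (x * y))
      by (rewrite <- Rpower_sqrt, <- Rpower_plus by auto; f_equal; field).
    assert (Hsq : sqrt (y / x) * sqrt (x * y) = y).
    { rewrite <- sqrt_mult by (apply Rlt_le; try apply Rdiv_lt_0_compat; lra).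
      replace (y / x * (x * y)) with (y * y) by (field; lra). apply sqrt_square; lra. }
    pose proof (Phi_pos (mu + 1) (x * y) ltac:(lra) ltac:(lra)).
    pose proof (Gamma_pos (mu + 1) ltac:(lra)).
    assert (0 < Rpower (x * y) (mu / 2)) by apply exp_pos.
    revert Hsq. generalize (sqrt (y / x)) (sqrt (x * y)) (Phi (mu + 2) (x * y)).
    generalize dependent (Phi (mu + 1) (x * y)). generalize dependent (Gamma_fun (mu + 1)).
    generalize dependent (Rpower (x * y) (mu / 2)). intros R1 HR1 G HG P HP q1 q2 p2 Hsq.
    rewrite <- Hsq. field. repeat split; lra.
Qed.



Lemma Ee_up x m : 0 <= x -> x * Ee x m <= INR (S m) * Ee x (S m).
Proof.
  intros Hx. induction m as [|m IH].
  - unfold Ee, tE; simpl. lra.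
  - assert (HS : INR (S (S m)) * tE x (S (S m)) = x * tE x (S m)).
    { rewrite tE_S. assert (0 < INR (S (S m))) by (apply lt_0_INR; lia). field. lra. }
    pose proof (Ee_ge1 x (S m) Hx).
    assert (E1 : Ee x (S m) = Ee x m + tE x (S m)) by apply Ee_S.
    assert (E2 : Ee x (S (S m)) = Ee x (S m) + tE x (S (S m))) by apply Ee_S.
    rewrite E2, Rmult_plus_distr_l, HS. rewrite (S_INR (S m)).
    rewrite E1 at 1. rewrite Rmult_plus_distr_l. lra.
Qed.

Lemma Ee_tE_cross x j d : 0 <= x -> Ee x j * tE x (j + d) <= Ee x (j + d) * tE x j.
Proof.
  intros Hx. induction d as [|d IH].
  - rewrite Nat.add_0_r. lra.
  - rewrite Nat.add_succ_r. rewrite tE_S.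
    pose proof (Ee_up x (j + d) Hx) as Hu.
    assert (HS : 0 < INR (S (j + d))) by (apply lt_0_INR; lia).
    pose proof (Ee_ge1 x j Hx). pose proof (tE_nonneg x j Hx). pose proof (tE_nonneg x (j + d) Hx).
    apply Rle_trans with (x / INR (S (j + d)) * (Ee x (j + d) * tE x j)).
    + replace (Ee x j * (x / INR (S (j + d)) * tE x (j + d))) with (x / INR (S (j + d)) * (Ee x j * tE x (j + d))) by ring.
      apply Rmult_le_compat_l; auto. apply Rdiv_le_0_compat; lra.
    + replace (x / INR (S (j + d)) * (Ee x (j + d) * tE x j)) with ((x * Ee x (j + d)) / INR (S (j + d)) * tE x j) by (field; lra).
      apply Rmult_le_compat_r; auto.
      apply Rmult_le_reg_r with (INR (S (j + d))); auto.
      unfold Rdiv. rewrite Rmult_assoc, Rinv_l by lra. lra.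
Qed.

Lemma sum_rev (f : nat -> R) n : sum_f_R0 f n = sum_f_R0 (fun k => f (n - k)%nat) n.
Proof.
  revert f. induction n as [|n IH]; intros f.
  - reflexivity.
  - rewrite decomp_sum by lia. simpl pred. rewrite (IH (fun i => f (S i))).
    rewrite tech5. rewrite Nat.sub_diag. rewrite Rplus_comm. f_equal.
    apply sum_eq. intros k Hk. f_equal. lia.
Qed.

Lemma Series_zero : Series (fun _ : nat => 0) = 0.
Proof.
  transitivity (PSeries (fun _ => 0) 0); [|apply PSeries_const_0].
  unfold PSeries. apply Series_ext. intros k. cbv beta. ring.
Qed.

Lemma series_pos (t : nat -> R) l : is_series t l -> (forall n, 0 <= t n) -> 0 < t 1%nat -> 0 < l.
Proof.
  intros Hs Hn H1. assert (Hex : ex_series t) by (exists l; auto).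
  rewrite <- (is_series_unique _ _ Hs).
  rewrite (Series_incr_n t 2) by (auto; lia). simpl pred.
  assert (0 <= Series (fun k => t (2 + k)%nat)).
  { rewrite <- Series_zero. apply Series_le.
    - intros; split; [lra| apply Hn].
    - apply (ex_series_incr_n t 2); auto. }
  change (sum_f_R0 t 1) with (t 0%nat + t 1%nat). specialize (Hn 0%nat). lra.
Qed.

Lemma is_series_Sf a x y : 0 < a -> 0 <= x -> is_series (fun k => sc a x k * y ^ k) (Sf a x y).
Proof.
  intros Ha Hx. pose proof (PSeries_correct (sc a x) y (ex_ps_inf _ _ (sc_radius a x Ha Hx))) as H.
  eapply is_series_ext; [|exact H]. intros k. cbv beta. rewrite pow_n_pow. unfold scal; simpl; unfold mult; simpl. ring.
Qed.

Lemma is_series_Phi b x y : 0 < b -> is_series (fun k => x ^ k * cphi b k * y ^ k) (Phi b (x * y)).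
Proof.
  intros Hb. pose proof (PSeries_correct (cphi b) (x * y) (ex_ps_inf _ _ (cphi_radius b Hb))) as H.
  eapply is_series_ext; [|exact H]. intros k. cbv beta. rewrite pow_n_pow. unfold scal; simpl; unfold mult; simpl.
  rewrite Rpow_mult_distr. ring.
Qed.

Lemma is_series_prod a b x y : 0 < a -> 0 < b -> 0 <= x -> 0 <= y ->
  is_series (fun n => y ^ n * sum_f_R0 (fun k => sc a x k * (x ^ (n - k) * cphi b (n - k))) n)
    (Sf a x y * Phi b (x * y)).
Proof.
  intros Ha Hb Hx Hy.
  pose proof (is_series_mult_pos _ _ _ _ (is_series_Sf a x y Ha Hx) (is_series_Phi b x y Hb)) as H.
  eapply is_series_ext; [|apply H].
  - intros n. rewrite scal_sum. apply sum_eq. intros k Hk.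
    replace (y ^ n) with (y ^ k * y ^ (n - k)) by (rewrite <- pow_add; f_equal; lia). ring.
  - intros n. apply Rmult_le_pos; [left; apply sc_pos; auto| apply pow_le; auto].
  - intros n. apply Rmult_le_pos; [|apply pow_le; auto]. apply Rmult_le_pos; [apply pow_le; auto| left; apply cphi_pos; auto].
Qed.

Lemma sum_scal_l (f : nat -> R) c n g : (forall k, g k = c * f k) -> sum_f_R0 g n = c * sum_f_R0 f n.
Proof.
  intros Hg. rewrite scal_sum. apply sum_eq. intros; rewrite Hg; ring.
Qed.

Section Core.
Variables (mu x : R).
Hypothesis Hmu : 0 < mu.
Hypothesis Hx : 0 <= x.

Definition aa k := Ee x k / poch (mu + 2) k.
Definition bb j := tE x j / poch (mu + 2) j.

Lemma aa_bb_cross j m : (j <= m)%nat -> aa j * bb m <= aa m * bb j.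
Proof.
  intros Hjm. replace m with (j + (m - j))%nat by lia.
  pose proof (Ee_tE_cross x j (m - j) Hx).
  unfold aa, bb.
  pose proof (poch_pos (mu + 2) j ltac:(lra)). pose proof (poch_pos (mu + 2) (j + (m - j)) ltac:(lra)).
  replace (Ee x j / poch (mu + 2) j * (tE x (j + (m - j)) / poch (mu + 2) (j + (m - j))))
    with ((Ee x j * tE x (j + (m - j))) / (poch (mu + 2) j * poch (mu + 2) (j + (m - j)))) by (field; lra).
  replace (Ee x (j + (m - j)) / poch (mu + 2) (j + (m - j)) * (tE x j / poch (mu + 2) j))
    with ((Ee x (j + (m - j)) * tE x j) / (poch (mu + 2) j * poch (mu + 2) (j + (m - j)))) by (field; lra).
  apply Rmult_le_compat_r; auto. left; apply Rinv_0_lt_compat, Rmult_lt_0_compat; auto.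
Qed.

Lemma term_id k j :
  mu * sc mu x k * (x ^ j * cphi (mu + 2) j) - (mu + 1) * (sc (mu + 1) x k * (x ^ j * cphi (mu + 1) j))
  = (INR k - INR j) / (mu + 1) * aa k * bb j.
Proof.
  unfold sc, cphi, aa, bb, tE.
  rewrite (poch_shift mu k).
  rewrite (poch_shift (mu + 1) k). replace (mu + 1 + 1) with (mu + 2) by ring.
  assert (E1 : forall n, poch (mu + 1) n * (mu + 1 + INR n) = (mu + 1) * poch (mu + 2) n).
  { intros n. replace (mu + 2) with (mu + 1 + 1) by ring. rewrite <- (poch_shift (mu + 1) n). reflexivity. }
  pose proof (E1 k) as Ek. pose proof (E1 j) as Ej.
  pose proof (poch_pos (mu + 1) k ltac:(lra)). pose proof (poch_pos (mu + 1) j ltac:(lra)).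
  pose proof (poch_pos (mu + 2) k ltac:(lra)). pose proof (poch_pos (mu + 2) j ltac:(lra)).
  pose proof (fact_pos j). pose proof (pos_INR k). pose proof (pos_INR j).
  revert Ek Ej H H0 H1 H2. generalize (poch (mu + 1) k) (poch (mu + 1) j) (poch (mu + 2) k) (poch (mu + 2) j).
  intros P1k P1j P2k P2j Ek Ej Q1 Q2 Q3 Q4.
  assert (P2k = P1k * (mu + 1 + INR k) / (mu + 1)) as -> by (rewrite Ek; field; lra).
  assert (P2j = P1j * (mu + 1 + INR j) / (mu + 1)) as -> by (rewrite Ej; field; lra).
  generalize (Ee x k) (x ^ j). intros.
  field. repeat split; lra.
Qed.

Lemma dsum_nonneg n : 0 <= sum_f_R0 (fun k => (INR k - INR (n - k)) * aa k * bb (n - k)) n.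
Proof.
  set (f := fun k => (INR k - INR (n - k)) * aa k * bb (n - k)).
  assert (Hr : sum_f_R0 f n = sum_f_R0 (fun k => f (n - k)%nat) n) by apply sum_rev.
  assert (H2 : 2 * sum_f_R0 f n = sum_f_R0 (fun k => (INR k - INR (n - k)) * (aa k * bb (n - k) - aa (n - k) * bb k)) n).
  { replace (2 * sum_f_R0 f n) with (sum_f_R0 f n + sum_f_R0 (fun k => f (n - k)%nat) n) by (rewrite <- Hr; ring).
    rewrite <- plus_sum. apply sum_eq. intros k Hk. unfold f.
    replace (n - (n - k))%nat with k by lia. ring. }
  assert (0 <= sum_f_R0 (fun k => (INR k - INR (n - k)) * (aa k * bb (n - k) - aa (n - k) * bb k)) n).
  { apply cond_pos_sum. intros k.
    destruct (Compare_dec.le_lt_dec (n - k) k) as [Hle|Hlt0]; [|pose proof Hlt0 as Hlt].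
    - apply Rmult_le_pos.
      + apply le_INR in Hle. lra.
      + pose proof (aa_bb_cross (n - k) k Hle). lra.
    - apply lt_INR in Hlt.
      pose proof (aa_bb_cross k (n - k) (Nat.lt_le_incl _ _ Hlt0)).
      replace ((INR k - INR (n - k)) * (aa k * bb (n - k) - aa (n - k) * bb k))
        with ((INR (n - k) - INR k) * (aa (n - k) * bb k - aa k * bb (n - k))) by ring.
      apply Rmult_le_pos; lra. }
  lra.
Qed.

Lemma d1_pos : 0 < sum_f_R0 (fun k => (INR k - INR (1 - k)) * aa k * bb (1 - k)) 1.
Proof.
  simpl. unfold aa, bb, Ee, tE. simpl.
  replace ((0 - 1) * (1 / 1 / 1) * (x * 1 / 1 / (1 * (mu + 2 + 0))) +
    (1 - 0) * ((1 / 1 + x * 1 / 1) / (1 * (mu + 2 + 0))) * (1 / 1 / 1)) with (/ (mu + 2)) by (field; lra).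
  apply Rinv_0_lt_compat; lra.
Qed.

Lemma core y : 0 < y ->
  (mu + 1) * Sf (mu + 1) x y * Phi (mu + 1) (x * y) < mu * Sf mu x y * Phi (mu + 2) (x * y).
Proof.
  intros Hy.
  pose proof (is_series_prod mu (mu + 2) x y Hmu ltac:(lra) Hx (Rlt_le _ _ Hy)) as H1.
  pose proof (is_series_prod (mu + 1) (mu + 1) x y ltac:(lra) ltac:(lra) Hx (Rlt_le _ _ Hy)) as H2.
  apply (is_series_scal mu) in H1. apply (is_series_scal (mu + 1)) in H2.
  pose proof (is_series_minus _ _ _ _ H1 H2) as H.
  set (d := fun n => y ^ n * (/ (mu + 1) * sum_f_R0 (fun k => (INR k - INR (n - k)) * aa k * bb (n - k)) n)).
  assert (Hd : is_series d (mu * (Sf mu x y * Phi (mu + 2) (x * y)) - (mu + 1) * (Sf (mu + 1) x y * Phi (mu + 1) (x * y)))).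
  { eapply is_series_ext; [|exact H]. intros n. unfold d, plus, opp, scal; simpl; unfold mult; simpl.
    replace (mu * (y ^ n * sum_f_R0 (fun k => sc mu x k * (x ^ (n - k) * cphi (mu + 2) (n - k))) n) +
      - ((mu + 1) * (y ^ n * sum_f_R0 (fun k => sc (mu + 1) x k * (x ^ (n - k) * cphi (mu + 1) (n - k))) n)))
      with (y ^ n * (sum_f_R0 (fun k => mu * sc mu x k * (x ^ (n - k) * cphi (mu + 2) (n - k))) n -
        sum_f_R0 (fun k => (mu + 1) * (sc (mu + 1) x k * (x ^ (n - k) * cphi (mu + 1) (n - k)))) n)).
    2:{ rewrite (sum_scal_l (fun k => sc mu x k * (x ^ (n - k) * cphi (mu + 2) (n - k))) mu n
           (fun k => mu * sc mu x k * (x ^ (n - k) * cphi (mu + 2) (n - k)))) by (intros; ring).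
        rewrite (sum_scal_l (fun k => sc (mu + 1) x k * (x ^ (n - k) * cphi (mu + 1) (n - k))) (mu + 1) n
           (fun k => (mu + 1) * (sc (mu + 1) x k * (x ^ (n - k) * cphi (mu + 1) (n - k))))) by (intros; ring).
        ring. }
    rewrite <- minus_sum. f_equal. rewrite scal_sum. apply sum_eq. intros k Hk. rewrite term_id. field. lra. }
  assert (0 < mu * (Sf mu x y * Phi (mu + 2) (x * y)) - (mu + 1) * (Sf (mu + 1) x y * Phi (mu + 1) (x * y))).
  { apply (series_pos d); auto.
    - intros n. unfold d. apply Rmult_le_pos; [apply pow_le; lra|].
      apply Rmult_le_pos; [left; apply Rinv_0_lt_compat; lra| apply dsum_nonneg].
    - unfold d. apply Rmult_lt_0_compat; [apply pow_lt; lra|].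
      apply Rmult_lt_0_compat; [apply Rinv_0_lt_compat; lra| apply d1_pos]. }
  lra.
Qed.

End Core.



Lemma div_lt_cross a b c d : 0 < b -> 0 < d -> a * d < c * b -> a / b < c / d.
Proof.
  intros Hb Hd H. apply Rmult_lt_reg_r with (b * d); [apply Rmult_lt_0_compat; auto|].
  replace (a / b * (b * d)) with (a * d) by (field; lra).
  replace (c / d * (b * d)) with (c * b) by (field; lra). exact H.
Qed.

Theorem theorem3 (mu x y : R) :
  0 < mu -> 0 <= x -> 0 < y ->
  MarcumP (mu + 1) x y / MarcumP mu x y < c_fun (mu + 1) x y.
Proof.
  intros Hmu Hx Hy.
  rewrite (Marcum_eq (mu + 1)) by (auto; lra). rewrite Marcum_eq by auto. rewrite c_eq by auto.
  rewrite Gamma_rec by auto.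
  pose proof (core mu x Hmu Hx y Hy) as Hc.
  unfold W. rewrite Rpower_plus, Rpower_1 by auto.
  pose proof (Gamma_pos mu Hmu) as HG.
  pose proof (PSeries_pos (sc mu x) y (fun n => sc_pos mu x n Hmu Hx) (Rlt_le _ _ Hy) (ex_ps_inf _ _ (sc_radius mu x Hmu Hx))) as HS0.
  pose proof (PSeries_pos (sc (mu + 1) x) y (fun n => sc_pos (mu + 1) x n ltac:(lra) Hx) (Rlt_le _ _ Hy) (ex_ps_inf _ _ (sc_radius (mu + 1) x ltac:(lra) Hx))) as HS1.
  pose proof (Phi_pos (mu + 1) (x * y) ltac:(lra) ltac:(apply Rmult_le_pos; lra)) as HP1.
  pose proof (Phi_pos (mu + 2) (x * y) ltac:(lra) ltac:(apply Rmult_le_pos; lra)) as HP2.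
  pose proof (exp_pos (- x)) as He1. pose proof (exp_pos (- y)) as He2.
  assert (HR : 0 < Rpower y mu) by apply exp_pos.
  unfold Sf in Hc. fold (Sf mu x y) (Sf (mu + 1) x y) in *.
  revert Hc HS0 HS1 HP1 HP2 He1 He2 HR HG.
  generalize (Sf mu x y) (Sf (mu + 1) x y) (Phi (mu + 1) (x * y)) (Phi (mu + 2) (x * y))
    (exp (- x)) (exp (- y)) (Rpower y mu) (Gamma_fun mu).
  intros S0 S1 P1 P2 e1 e2 R G Hc HS0 HS1 HP1 HP2 He1 He2 HR HG.
  replace (e1 / (mu * G) * (e2 * (R * y) * S1) / (e1 / G * (e2 * R * S0))) with ((y * S1) / (mu * S0)) by (field; repeat split; lra).
  apply div_lt_cross; [apply Rmult_lt_0_compat; lra| apply Rmult_lt_0_compat; lra|].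
  nra.
Qed.
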